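(* Let $A\in\mathbb{R}^{n\times n}$, $B\in\mathbb{R}^{n\times m}$, $C\in\mathbb{R}^{m\times n}$, $D\in\mathbb{R}^{m\times m}$ with $D=-D^T$ and $\operatorname{rank}B=r$, and consider the system $\dot x=Ax+Bu$, $y=Cx+Du$. Let $\tilde N_B,\tilde N_C\in\mathbb{R}^{n\times(n-r)}$ have columns spanning $\operatorname{Ker}B^T$ and $\operatorname{Ker}C$, respectively, with $\tilde N_B^T\tilde N_C=I$. Then the system is equivalent to a port-Hamiltonian system if and only if (1) $\operatorname{Ker}C^T=\operatorname{Ker}B$, $\operatorname{rank}(CB)=r$, and $CB$ is symmetric positive semidefinite; and (2) with an orthogonal $V\in\mathbb{R}^{m\times m}$ such that $BV=[B_1\;\;0]$, $C^TV=[C_1^T\;\;0]$, $B_1,C_1^T\in\mathbb{R}^{n\times r}$ of full column rank, $C_1B_1=YY^T$ with $Y\in\mathbb{R}^{r\times r}$ invertible, and with $$T_0=\begin{bmatrix}\tilde N_B^T\\ Y^{-1}C_1\end{bmatrix},\qquad T_0^{-1}=\begin{bmatrix}\tilde N_C & B_1Y^{-T}\end{bmatrix},$$ there exists an invertible matrix $Z\in\mathbb{R}^{(n-r)\times(n-r)}$ such that $$\begin{bmatrix}Z&0\\0&I\end{bmatrix}T_0AT_0^{-1}\begin{bmatrix}Z^{-1}&0\\0&I\end{bmatrix}+\left(\begin{bmatrix}Z&0\\0&I\end{bmatrix}T_0AT_0^{-1}\begin{bmatrix}Z^{-1}&0\\0&I\end{bmatrix}\right)^T$$ is negative semidefinit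e.
   Context: A PH system is $\dot\xi=(J-R)Q\xi+(F-P)\varphi$, $\eta=(F+P)^TQ\xi+(S+N)\varphi$ with $J,R,Q\in\mathbb{R}^{n\times n}$, $F,P\in\mathbb{R}^{n\times m}$, $S,N\in\mathbb{R}^{m\times m}$, $J=-J^T$, $R=R^T$, $Q=Q^T$ positive definite, $S=S^T$, $N=-N^T$, and $\begin{bmatrix}R&P\\P^T&S\end{bmatrix}$ symmetric positive semidefinite. The system $\dot x=Ax+Bu$, $y=Cx+Du$ is equivalent to a PH system if there exist invertible $V'\in\mathbb{R}^{m\times m}$, $T\in\mathbb{R}^{n\times n}$ such that the substitution $u=V'\varphi$, $\eta=V'^Ty$, $x=T\xi$ transforms it into a PH system, i.e. $T^{-1}AT=(J-R)Q$, $T^{-1}BV'=F-P$, $V'^TCT=(F+P)^TQ$, $V'^TDV'=S+N$. (Under (1), the matrix $T_0$ in (2) is invertible with the displayed inverse.) *)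

(* Defs.v *)
From HB Require Import structures.
From mathcomp Require Import all_boot all_order all_algebra.
Set Implicit Arguments. Unset Strict Implicit. Unset Printing Implicit Defensive.
Import Order.TTheory GRing.Theory Num.Theory.
Local Open Scope ring_scope.

Section Defs.
Variable R : numFieldType.

Definition sym_psd n (M : 'M[R]_n) : Prop :=
  M^T = M /\ forall x : 'cV[R]_n, 0 <= (x^T *m M *m x) 0 0.

Definition sym_pd n (M : 'M[R]_n) : Prop :=
  M^T = M /\ forall x : 'cV[R]_n, x != 0 -> 0 < (x^T *m M *m x) 0 0.

Definition nsd n (M : 'M[R]_n) : Prop :=
  forall x : 'cV[R]_n, (x^T *m M *m x) 0 0 <= 0.

(* colker X : a matrix whose row space is { x^T | X *m x = 0 }, i.e. the
   (transposed) kernel Ker X of X acting on column vectors. *)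
Definition colker l n (X : 'M[R]_(l, n)) : 'M[R]_n := kermx X^T.

Definition cols_span_ker n k l (N : 'M[R]_(n, k)) (X : 'M[R]_(l, n)) : bool :=
  (N^T == colker X)%MS.

Definition PH_structure n m (J Rm Q : 'M[R]_n) (F P : 'M[R]_(n, m))
    (S N : 'M[R]_m) : Prop :=
  [/\ J^T = - J, sym_pd Q, S^T = S, N^T = - N
    & sym_psd (block_mx Rm P P^T S)].
(* (R = R^T is part of sym_psd of the block matrix.) *)

(* The system x' = Ax + Bu, y = Cx + Du is equivalent to a PH system:
   there are invertible V', T with u = V' phi, eta = V'^T y, x = T xi
   transforming it into a PH system. *)
Definition equiv_PH n m (A : 'M[R]_n) (B : 'M[R]_(n, m)) (C : 'M[R]_(m, n))
    (D : 'M[R]_m) : Prop :=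
  exists (V' : 'M[R]_m) (T : 'M[R]_n),
    V' \in unitmx /\ T \in unitmx /\
    exists (J Rm Q : 'M[R]_n) (F P : 'M[R]_(n, m)) (S N : 'M[R]_m),
      [/\ PH_structure J Rm Q F P S N,
          invmx T *m A *m T = (J - Rm) *m Q,
          invmx T *m B *m V' = F - P,
          V'^T *m C *m T = (F + P)^T *m Q
        & V'^T *m D *m V' = S + N].

End Defs.

(* Main.v *)
Require Import Defs.
From HB Require Import structures.
From mathcomp Require Import all_boot all_order all_algebra.
From mathcomp Require Import ring lra zify.
Set Implicit Arguments. Unset Strict Implicit. Unset Printing Implicit Defensive.
Import Order.TTheory GRing.Theory Num.Theory.
Local Open Scope ring_scope.

Section H.
Variable R : rcfType.

Lemma mul_self_ge0 (a : R) : 0 <= a * a.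
Proof. by rewrite -expr2 sqr_ge0. Qed.

Definition qf n (M : 'M[R]_n) (x : 'cV[R]_n) : R := (x^T *m M *m x) 0 0.

Lemma qf_tr n (M : 'M[R]_n) x : qf M^T x = qf M x.
Proof.
rewrite /qf; have -> : x^T *m M^T *m x = (x^T *m M *m x)^T.
  by rewrite !trmx_mul trmxK mulmxA.
by rewrite mxE.
Qed.

Lemma qfD n (M N : 'M[R]_n) x : qf (M + N) x = qf M x + qf N x.
Proof. by rewrite /qf mulmxDr mulmxDl mxE. Qed.

Lemma qfN n (M : 'M[R]_n) x : qf (- M) x = - qf M x.
Proof. by rewrite /qf mulmxN mulNmx mxE. Qed.

Lemma qfZ n a (M : 'M[R]_n) x : qf (a *: M) x = a * qf M x.
Proof. by rewrite /qf -scalemxAr -scalemxAl mxE. Qed.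

Lemma qfM n (G M : 'M[R]_n) x : qf (G^T *m M *m G) x = qf M (G *m x).
Proof. by rewrite /qf trmx_mul !mulmxA. Qed.

Lemma nsdE n (M : 'M[R]_n) : nsd (M + M^T) <-> forall x, qf M x <= 0.
Proof.
split=> H x.
  have := H x; rewrite -/(qf _ x) qfD qf_tr. lra.
by rewrite -/(qf _ x) qfD qf_tr; have := H x; lra.
Qed.

Lemma sumsq_ge0 n (x : 'cV[R]_n) : 0 <= (x^T *m x) 0 0.
Proof.
rewrite mxE; apply: sumr_ge0 => i _; rewrite mxE; exact: mul_self_ge0.
Qed.

Lemma sumsq_eq0 n (x : 'cV[R]_n) : (x^T *m x) 0 0 = 0 -> x = 0.
Proof.
rewrite mxE => H; apply/matrixP => i j; rewrite (ord1 j) mxE.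
have hnn : forall k : 'I_n, true -> 0 <= x^T 0 k * x k 0.
  by move=> k _; rewrite mxE mul_self_ge0.
have := psumr_eq0P hnn H; move=> /(_ i isT) /eqP.
by rewrite mxE mulf_eq0 orbb => /eqP.
Qed.

Lemma sumsq_gt0 n (x : 'cV[R]_n) : x != 0 -> 0 < (x^T *m x) 0 0.
Proof.
move=> nz; rewrite lt_def sumsq_ge0 andbT; apply/eqP => /sumsq_eq0 h.
by rewrite h eqxx in nz.
Qed.

Lemma quad0 (a b : R) : 0 <= b -> (forall t, 0 <= a * t + b * t ^+ 2) -> a = 0.
Proof.
move=> hb H.
have hb1 : 0 < b + 1 by lra.
have := H (- a / (b + 1)).
have -> : a * (- a / (b + 1)) + b * (- a / (b + 1)) ^+ 2
          = - (a ^+ 2) / (b + 1) ^+ 2.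
  by field; lra.
move=> h.
have h2 : 0 < ((b + 1) ^+ 2)^-1 by rewrite invr_gt0 exprn_gt0.
move: h; rewrite mulNr oppr_ge0 => h.
set e := ((b + 1) ^+ 2)^-1 in h h2.
have ha : a ^+ 2 <= 0 by nra.
have : a ^+ 2 == 0 by rewrite eq_le ha sqr_ge0.
by rewrite sqrf_eq0 => /eqP.
Qed.

Definition bf n (M : 'M[R]_n) (x y : 'cV[R]_n) : R := (x^T *m M *m y) 0 0.

Lemma qf_add n (M : 'M[R]_n) x y t :
  qf M (x + t *: y) = qf M x + t * bf M y x + t * bf M x y + t ^+ 2 * qf M y.
Proof.

rewrite /qf /bf.
have -> : (x + t *: y)^T = x^T + t *: y^T by rewrite linearD /= linearZ.
rewrite !mulmxDl !mulmxDr -!scalemxAl -!scalemxAr !mxE /=.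
by rewrite expr2; ring.
Qed.

Lemma bf_sym n (M : 'M[R]_n) x y : M^T = M -> bf M x y = bf M y x.
Proof.
move=> hs; rewrite /bf.
have -> : x^T *m M *m y = (y^T *m M *m x)^T.
  by rewrite !trmx_mul trmxK hs mulmxA.
by rewrite mxE.
Qed.

Lemma psd_zero n (M : 'M[R]_n) x : sym_psd M -> qf M x = 0 -> M *m x = 0.
Proof.
move=> [hs hp] h0.
have key : forall y : 'cV[R]_n, bf M y x = 0.
  move=> y.
  have hq : bf M y x *+ 2 = 0.
    apply: (@quad0 _ (qf M y) (hp y)) => t.
    have := hp (x + t *: y); rewrite -/(qf _ _) qf_add h0.
    rewrite (bf_sym _ _ hs) => h; rewrite mulr2n; lra.
  by move/eqP: hq; rewrite mulrn_eq0 /= => /eqP.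
apply: sumsq_eq0.
have := key (M *m x); rewrite /bf trmx_mul hs.
by rewrite !mulmxA.
Qed.

Lemma inj_unit n (M : 'M[R]_n) : (forall x : 'cV[R]_n, M *m x = 0 -> x = 0) ->
  M \in unitmx.
Proof.
move=> H; rewrite -unitmx_tr -row_free_unit -kermx_eq0.
apply/eqP/row_matrixP => i; rewrite row0.
have : row i (kermx M^T) *m M^T = 0 by rewrite -row_mul mulmx_ker row0.
move=> /(congr1 trmx); rewrite trmx_mul trmxK trmx0 => /H /(congr1 trmx).
by rewrite trmxK trmx0.
Qed.

Lemma pd_unit n (X : 'M[R]_n) : sym_pd X -> X \in unitmx.
Proof.
move=> [_ hp]; apply: inj_unit => x hx; apply/eqP; apply/negP => nz.
by have := hp x (introN idP nz); rewrite -mulmxA hx mulmx0 mxE ltxx.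
Qed.

Lemma qf_blk a b (A : 'M[R]_a) (S : 'M[R]_b) u v :
  qf (block_mx A 0 0 S) (col_mx u v) = qf A u + qf S v.
Proof.
rewrite /qf tr_col_mx mul_row_block ?mulmx0 ?mul0mx ?addr0 ?add0r mul_row_col.
by rewrite mxE.
Qed.

Lemma qf0 n (M : 'M[R]_n) : qf M 0 = 0.
Proof. by rewrite /qf mulmx0 mxE. Qed.

Lemma qf0m n (x : 'cV[R]_n) : qf 0 x = 0.
Proof. by rewrite /qf mulmx0 mul0mx mxE. Qed.

Lemma pd_blk a b (A : 'M[R]_a) (S : 'M[R]_b) :
  sym_pd (block_mx A 0 0 S) -> sym_pd A /\ sym_pd S.
Proof.
move=> [hs hp]; move: hs; rewrite tr_block_mx !trmx0 => /eq_block_mx [h1 _ _ h4].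
split; split => // x nz.
  have := hp (col_mx x 0); rewrite col_mx_eq0 (negbTE nz) /= => /(_ isT).
  by rewrite -/(qf _ _) qf_blk qf0 addr0.
have := hp (col_mx 0 x); rewrite col_mx_eq0 (negbTE nz) andbF => /(_ isT).
by rewrite -/(qf _ _) qf_blk qf0 add0r.
Qed.

Lemma pd_congr m (G M : 'M[R]_m) : G \in unitmx -> sym_pd M -> sym_pd (G *m M *m G^T).
Proof.
move=> hG [hs hp]; split.
  by rewrite !trmx_mul trmxK hs mulmxA.
move=> x nz.
have -> : (x^T *m (G *m M *m G^T) *m x) 0 0 = qf M (G^T *m x).
  by rewrite /qf trmx_mul trmxK !mulmxA.
apply: hp.
apply/eqP => h; move/eqP: nz; apply.
by rewrite -[x]mul1mx -(mulVmx (etrans (unitmx_tr G) hG)) -mulmxA h mulmx0.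
Qed.

Lemma chol n (M : 'M[R]_n) : sym_pd M -> exists Y, Y \in unitmx /\ M = Y *m Y^T.
Proof.
elim: n M => [|n IH] M hM.
  by exists 1%:M; split; [exact: unitmx1 | rewrite [M]flatmx0 [_ *m _]flatmx0].
suff H : forall M : 'M[R]_(1 + n), sym_pd M -> exists Y, Y \in unitmx /\ M = Y *m Y^T.
  exact: H.
clear hM M; move=> M hM.
set a := ulsubmx M; set b := ursubmx M; set c := dlsubmx M; set d := drsubmx M.
set al := a 0 0.
have hb : b = c^T by rewrite /b /c -{1}hM.1 -trmx_dlsub.
have ha : a = al%:M by rewrite /al -mx11_scalar.
have hal : 0 < al.
  have := hM.2 (col_mx 1%:M 0); rewrite col_mx_eq0 oner_eq0 /= => /(_ isT).
  rewrite -[M]submxK tr_col_mx trmx0 mul_row_block !mul0mx !addr0.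
  by rewrite mul_row_col mulmx0 addr0 trmx1 mul1mx mulmx1.
have hal0 : al != 0 by rewrite gt_eqF.
set c' := - (al^-1) *: c.
set E : 'M[R]_(1 + n) := block_mx 1%:M 0 c' 1%:M.
set S := d - al^-1 *: (c *m b).
have hE : E \in unitmx.
  by rewrite unitmxE det_lblock !det1 mulr1 unitr1.
have hEM : E *m M *m E^T = block_mx a 0 0 S.
  rewrite -[M in E *m M]submxK /E tr_block_mx !trmx1 trmx0 !mulmx_block.
  rewrite !mul1mx !mul0mx !addr0 !mulmx1 !mulmx0 !addr0.
  have h3 : c' *m a + c = 0.
    by rewrite ha mul_mx_scalar /c' scalerA mulrN mulfV // scaleN1r addNr.
  rewrite h3 mul0mx add0r; congr block_mx.
  all: rewrite -/a -/b -/c -/d.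
  - rewrite ha mul_scalar_mx /c' linearZ /= scalerA mulrN mulfV // scaleN1r.
    by rewrite hb addNr.
  - by rewrite /S /c' scaleNr mulNmx scalemxAl addrC.
have hEMpd := pd_congr hE hM; rewrite hEM in hEMpd.
have [hpa hpS] := pd_blk hEMpd.
have [Y' [hY' eY']] := IH S hpS.
set s := Num.sqrt al.
have hs : 0 < s by rewrite sqrtr_gt0.
set Dm : 'M[R]_(1 + n) := block_mx s%:M 0 0 Y'.
have hD : Dm *m Dm^T = block_mx a 0 0 S.
  rewrite /Dm tr_block_mx !trmx0 mulmx_block !mulmx0 !mul0mx !addr0 !add0r -eY'.
  by rewrite tr_scalar_mx -scalar_mxM -expr2 sqr_sqrtr ?(ltW hal) // ha.
exists (invmx E *m Dm); split.
  rewrite unitmx_mul unitmx_inv hE /= unitmxE det_lblock det_scalar1 unitfE.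
  apply: mulf_neq0; first by rewrite gt_eqF.
  by move: hY'; rewrite unitmxE unitfE.
rewrite (trmx_mul (invmx E) Dm) !mulmxA -(mulmxA _ Dm) hD -hEM trmx_inv.
rewrite !mulmxA mulVmx // mul1mx -mulmxA mulmxV ?mulmx1 // unitmx_tr //.
Qed.

Lemma orth_rows s m (K : 'M[R]_(s, m)) : row_free K ->
  exists Q : 'M[R]_(s, m), Q *m Q^T = 1%:M /\ (Q <= K)%MS.
Proof.
move=> hK.
have hG : sym_pd (K *m K^T).
  split; first by rewrite trmx_mul trmxK.
  move=> x nz.
  have -> : (x^T *m (K *m K^T) *m x) 0 0 = ((K^T *m x)^T *m (K^T *m x)) 0 0.
    by rewrite trmx_mul trmxK !mulmxA.
  apply: sumsq_gt0; apply/eqP => h; move/eqP: nz; apply.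
  have : (x^T <= kermx K)%MS.
    by rewrite sub_kermx -[x^T *m K]trmxK trmx_mul trmxK h trmx0.
  move: hK; rewrite -kermx_eq0 => /eqP ->; rewrite submx0 => /eqP /(congr1 trmx).
  by rewrite trmxK trmx0.
have [L [hL eL]] := chol hG.
exists (invmx L *m K); split; last exact: submxMl.
rewrite trmx_mul !mulmxA -(mulmxA _ K) eL trmx_inv !mulmxA mulVmx // mul1mx.
by rewrite mulmxV // unitmx_tr.
Qed.

Lemma exists_orth s m (K : 'M[R]_m) : \rank K = s ->
  exists Q : 'M[R]_(s, m), Q *m Q^T = 1%:M /\ (Q <= K)%MS.
Proof.
move=> <-; have [Q [h1 h2]] := orth_rows (row_base_free K).
by exists Q; split => //; rewrite (submx_trans h2) // eq_row_base.
Qed.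

Lemma orth_rank s m (Q : 'M[R]_(s, m)) : Q *m Q^T = 1%:M -> \rank Q = s.
Proof.
move=> h; apply/eqP; rewrite eqn_leq rank_leq_row /=.
by rewrite -{1}(mxrank1 R s) -h mxrankM_maxl.
Qed.

Lemma qf_blk_u a b (A : 'M[R]_a) Bm Cm (Dm : 'M[R]_b) u :
  qf (block_mx A Bm Cm Dm) (col_mx u 0) = qf A u.
Proof.
rewrite /qf tr_col_mx trmx0 mul_row_block !mul0mx !addr0 mul_row_col.
by rewrite mulmx0 addr0.
Qed.

Lemma qf_blk_d a b (A : 'M[R]_a) Bm Cm (Dm : 'M[R]_b) v :
  qf (block_mx A Bm Cm Dm) (col_mx 0 v) = qf Dm v.
Proof.
rewrite /qf tr_col_mx trmx0 mul_row_block !mul0mx !add0r mul_row_col.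
by rewrite mulmx0 add0r.
Qed.

Lemma skew_qf n (J : 'M[R]_n) x : J^T = - J -> qf J x = 0.
Proof.
move=> h; have := qf_tr J x; rewrite h qfN => e; lra.
Qed.

Lemma half_split n (K : 'M[R]_n) :
  let Rm := - (2^-1 *: (K + K^T)) in (K + Rm)^T = - (K + Rm) /\ Rm^T = Rm.
Proof.
move=> Rm; split; apply/matrixP => i j; rewrite /Rm !mxE; lra.
Qed.

Lemma equivX n m (A : 'M[R]_n) (B : 'M[R]_(n, m)) C D : D = - D^T ->
  equiv_PH A B C D <->
  exists X, sym_pd X /\ C = B^T *m X /\ (forall x, qf (X *m A) x <= 0).
Proof.
move=> hD0; have hDt : D^T = - D by rewrite {1}hD0 linearN /= trmxK.
split.
- move=> [V' [T [hV [hT [J [Rm [Q [F [P [S [N [[hJ hQ hS hN hblk] hA hB hC hDD]]]]]]]]]]]].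
  have hS0 : S = 0.
    have e1 : (S + N)^T = - (S + N).
      by rewrite -hDD !trmx_mul trmxK hDt mulNmx mulmxN mulmxA.
    rewrite linearD /= hS hN in e1.
    apply/matrixP => i j; move/matrixP: e1 => /(_ i j); rewrite !mxE => h; lra.
  subst S.
  have hP0 : P = 0.
    have hPv : forall v : 'cV[R]_m, P *m v = 0.
      move=> v.
      have := psd_zero (x := col_mx 0 v) hblk.
      rewrite qf_blk_d qf0m => /(_ erefl).
      rewrite mul_block_col !mulmx0 !add0r mul0mx => /eqP.
      by rewrite col_mx_eq0 => /andP [/eqP].
    apply/matrixP => i j; have := hPv (delta_mx j 0).
    by rewrite -colE => /matrixP /(_ i 0); rewrite !mxE.
  subst P.
  set Ti := invmx T.
  exists (Ti^T *m Q *m Ti); split; last split.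
  - have := pd_congr (G := Ti^T) _ hQ; rewrite trmxK; apply.
    by rewrite unitmx_tr unitmx_inv.
  - rewrite subr0 in hB; rewrite addr0 -hB in hC.
    have -> : C = invmx V'^T *m (V'^T *m C *m T) *m Ti.
      rewrite !mulmxA mulVmx ?unitmx_tr // mul1mx -mulmxA mulmxV // mulmx1.
      done.
    rewrite hC !trmx_mul !mulmxA mulVmx ?unitmx_tr // mul1mx.
    by rewrite /Ti trmx_inv.
  - move=> x.
    have hTA : Ti *m A = (J - Rm) *m Q *m Ti.
      by rewrite -hA -!mulmxA mulmxV // mulmx1.
    have -> : Ti^T *m Q *m Ti *m A = Ti^T *m (Q^T *m (J - Rm) *m Q) *m Ti.
      by rewrite -mulmxA hTA hQ.1 !mulmxA.
    rewrite qfM qfM qfD qfN skew_qf // add0r oppr_le0.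
    have := hblk.2 (col_mx (Q *m (Ti *m x)) 0).
    by rewrite -/(qf _ _) qf_blk_u.
- move=> [X [hX [hC hq]]].
  have hXu := pd_unit hX.
  set K := A *m invmx X.
  have [hJ hRm] := half_split K.
  set Rm := - (2^-1 *: (K + K^T)) in hJ hRm.
  exists 1%:M, 1%:M; split; first exact: unitmx1.
  split; first exact: unitmx1.
  exists (K + Rm), Rm, X, B, 0, 0, D; split.
  - split => //; first by rewrite trmx0.
    split; first by rewrite tr_block_mx !trmx0 hRm.
    move=> x; rewrite -[x]vsubmxK -/(qf _ _).
    rewrite trmx0 qf_blk qf0m addr0 /Rm qfN qfZ qfD qf_tr.
    set u := usubmx x.
    have -> : qf K u = qf (X *m A) (invmx X *m u).
      rewrite -{1}[u](mulKVmx hXu) /K -(trmxK X) -qfM trmxK hX.1.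
      by rewrite -!mulmxA mulVmx // mulmx1.
    have := hq (invmx X *m u).
    have h2 : (0 : R) < 2^-1 by rewrite invr_gt0.
    move=> h; rewrite oppr_ge0; nra.
  - by rewrite invmx1 mul1mx mulmx1 addrK /K -mulmxA mulVmx // mulmx1.
  - by rewrite invmx1 mul1mx mulmx1 subr0.
  - by rewrite trmx1 mul1mx mulmx1 addr0.
  - by rewrite trmx1 mul1mx mulmx1 add0r.
Qed.

Lemma T0_inv k r p (B : 'M[R]_(k + r, r + p)) (C : 'M[R]_(r + p, k + r))
   (NB NC : 'M[R]_(k + r, k)) (V : 'M[R]_(r + p)) (B1 : 'M[R]_(k + r, r))
   (C1 : 'M[R]_(r, k + r)) (Y : 'M[R]_r) :
  NB^T *m B = 0 -> C *m NC = 0 -> NB^T *m NC = 1%:M ->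
  B *m V = row_mx B1 0 -> C^T *m V = row_mx C1^T 0 ->
  Y \in unitmx -> C1 *m B1 = Y *m Y^T ->
  col_mx NB^T (invmx Y *m C1) *m row_mx NC (B1 *m invmx Y^T) = 1%:M.
Proof.
move=> hB hC hN hBV hCV hY hYY.
have eB1 : B1 = B *m lsubmx V by rewrite mulmx_lsub hBV row_mxKl.
have eC1 : C1 = (lsubmx V)^T *m C.
  by rewrite -[C1]trmxK -[C]trmxK -trmx_mul mulmx_lsub hCV row_mxKl.
rewrite mul_col_row (scalar_mx_block k r); congr block_mx.
- exact: hN.
- by rewrite eB1 !mulmxA hB !mul0mx.
- by rewrite eC1 -!mulmxA hC !mulmx0.
- rewrite !mulmxA -(mulmxA _ C1) hYY mulmxA mulVmx // mul1mx mulmxV //.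
  by rewrite unitmx_tr.
Qed.

Lemma diag_mul k r (Z : 'M[R]_k) : Z \in unitmx ->
  block_mx Z 0 0 (1%:M : 'M[R]_r) *m block_mx (invmx Z) 0 0 1%:M = 1%:M.
Proof.
move=> hZ; rewrite mulmx_block !mulmx0 !mul0mx !addr0 !add0r mulmxV // mulmx1.
by rewrite -scalar_mx_block.
Qed.

Lemma pd_inj a b (X : 'M[R]_a) (G : 'M[R]_(a, b)) : sym_pd X ->
  (forall x : 'cV[R]_b, G *m x = 0 -> x = 0) -> sym_pd (G^T *m X *m G).
Proof.
move=> [hs hp] hG; split; first by rewrite !trmx_mul trmxK hs mulmxA.
move=> x nz; have -> : (x^T *m (G^T *m X *m G) *m x) 0 0 = qf X (G *m x).
  by rewrite /qf trmx_mul !mulmxA.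
apply: hp; apply/eqP => /hG h; by rewrite h eqxx in nz.
Qed.

Lemma psd_unit_pd n (M : 'M[R]_n) : sym_psd M -> M \in unitmx -> sym_pd M.
Proof.
move=> hM hu; split; first exact: hM.1.
move=> x nz; rewrite lt_def hM.2 andbT; apply/eqP => h.
have := psd_zero hM h => hx.
have : x = 0 by rewrite -[x](mulKmx hu) hx mulmx0.
by move=> e; rewrite e eqxx in nz.
Qed.

Lemma fwd2 k r p (A : 'M[R]_(k + r)) (B : 'M[R]_(k + r, r + p))
   (C : 'M[R]_(r + p, k + r))
   (NB NC : 'M[R]_(k + r, k)) (V : 'M[R]_(r + p)) (B1 : 'M[R]_(k + r, r))
   (C1 : 'M[R]_(r, k + r)) (Y : 'M[R]_r) (X : 'M[R]_(k + r)) :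
  sym_pd X -> C = B^T *m X -> (forall x, qf (X *m A) x <= 0) ->
  NB^T *m B = 0 -> C *m NC = 0 -> NB^T *m NC = 1%:M ->
  B *m V = row_mx B1 0 -> C^T *m V = row_mx C1^T 0 ->
  Y \in unitmx -> C1 *m B1 = Y *m Y^T ->
  let T0 : 'M[R]_(k + r) := col_mx NB^T (invmx Y *m C1) in
  let T0inv : 'M[R]_(k + r) := row_mx NC (B1 *m invmx Y^T) in
  exists Z : 'M[R]_k, Z \in unitmx /\
    let M := block_mx Z 0 0 1%:M *m (T0 *m A *m T0inv)
               *m block_mx (invmx Z) 0 0 1%:M in
    nsd (M + M^T).
Proof.
move=> hX hC hq hB hCN hN hBV hCV hY hYY T0 T0inv.
have hinj : forall x : 'cV[R]_k, NC *m x = 0 -> x = 0.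
  by move=> x h; rewrite -[x]mul1mx -hN -mulmxA h mulmx0.
have [L [hL eL]] := chol (pd_inj hX hinj).
pose Z := L^T.
have hZ : Z \in unitmx by rewrite unitmx_tr.
exists Z; split => //.
move=> M; apply/nsdE => x.
set W' := block_mx Z 0 0 1%:M *m T0.
set W := T0inv *m block_mx (invmx Z) 0 0 1%:M.
have hT : T0 *m T0inv = 1%:M := T0_inv hB hCN hN hBV hCV hY hYY.
have eM : M = W' *m A *m W.
  by rewrite /M /W' /W !mulmxA; reflexivity.
have eB1 : B1 = B *m lsubmx V.
  by rewrite mulmx_lsub hBV row_mxKl; reflexivity.
have eC1 : C1 = (lsubmx V)^T *m C.
  by rewrite -[C1]trmxK -[C]trmxK -trmx_mul mulmx_lsub hCV row_mxKl; reflexivity.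
have XB : X *m B = C^T by rewrite hC trmx_mul trmxK hX.1; reflexivity.
have XB1 : X *m B1 = C1^T.
  by rewrite eB1 mulmxA XB mulmx_lsub hCV row_mxKl.
have XB1t : B1^T *m X = C1 by rewrite -[X]hX.1 -trmx_mul XB1 trmxK.
have C1NC : C1 *m NC = 0 by rewrite eC1 -mulmxA hCN mulmx0.
have hmid : col_mx NC^T (B1 *m invmx Y^T)^T *m X *m row_mx NC (B1 *m invmx Y^T)
            = block_mx (Z^T *m Z) 0 0 1%:M.
  rewrite mul_col_mx mul_col_row; congr block_mx.
  - by rewrite eL /Z trmxK.
  - by rewrite -!mulmxA (mulmxA X B1) XB1 mulmxA -trmx_mul C1NC trmx0 mul0mx.
  - by rewrite trmx_mul -!mulmxA (mulmxA B1^T) XB1t C1NC mulmx0.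
  - rewrite trmx_mul -!mulmxA (mulmxA B1^T) XB1t (mulmxA C1) hYY trmx_inv trmxK.
    by rewrite !mulmxA mulVmx // mul1mx mulmxV // unitmx_tr.
have hWXW : W^T *m X *m W = 1%:M.
  have -> : W^T *m X *m W = (block_mx (invmx Z) 0 0 1%:M)^T *m
     (col_mx NC^T (B1 *m invmx Y^T)^T *m X *m row_mx NC (B1 *m invmx Y^T))
     *m block_mx (invmx Z) 0 0 1%:M.
    by rewrite /W /T0inv trmx_mul tr_row_mx !mulmxA.
  rewrite hmid tr_block_mx !trmx0 trmx1 !mulmx_block !mulmx0 !mul0mx !addr0 !add0r.
  rewrite !mulmx1 !mulmxA -trmx_mul mulmxV // trmx1 mul1mx mulmxV //.
  by rewrite mul0mx -scalar_mx_block.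
have hWu : W \in unitmx := (mulmx1_unit hWXW).2.
have hW'W : W' *m W = 1%:M.
  by rewrite /W' /W -mulmxA (mulmxA T0) hT mul1mx diag_mul.
have eW' : W' = W^T *m X.
  rewrite -[W']mulmx1 -(mulmxV hWu) mulmxA hW'W mul1mx.
  by rewrite -[W^T *m X]mulmx1 -(mulmxV hWu) mulmxA hWXW mul1mx.
by rewrite eM eW' -(mulmxA W^T X A) qfM.
Qed.

Lemma rank_from_ker m n1 n2 (M1 : 'M[R]_(m, n1)) (M2 : 'M[R]_(m, n2)) :
  (kermx M1 == kermx M2)%MS -> \rank M1 = \rank M2.
Proof.
move=> /eqmx_rank; rewrite !mxrank_ker.
have := rank_leq_row M1; have := rank_leq_row M2; lia.
Qed.

Lemma rank_BXB m s (B : 'M[R]_(m, s)) (X : 'M[R]_m) : sym_pd X ->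
  \rank (B^T *m X *m B) = \rank B.
Proof.
move=> hX; rewrite -(mxrank_tr B); apply: rank_from_ker.
apply/andP; split; rewrite sub_kermx; last by rewrite !mulmxA mulmx_ker !mul0mx.
apply/eqP/row_matrixP => i; rewrite row0 row_mul.
set u := row i (kermx (B^T *m X *m B)).
have hu : u *m (B^T *m X *m B) = 0 by rewrite /u -row_mul mulmx_ker row0.
set w := B *m u^T.
have : qf X w = 0.
  have e : w^T *m X *m w = u *m (B^T *m X *m B) *m u^T.
    by rewrite /w trmx_mul trmxK !mulmxA.
  by rewrite /qf e hu mul0mx mxE.
move=> h0; have : w = 0.
  apply/eqP; apply/negP => nz.
  by have := hX.2 w (introN idP nz); rewrite -/(qf _ _) h0 ltxx.
by rewrite /w => /(congr1 trmx); rewrite trmx_mul trmxK trmx0.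
Qed.
End H.

(* Dimensions: n = k + r (k = n - r), m = r + p (p = m - r). *)
Theorem corollary3p3 (R : rcfType) (k r p : nat)
    (A : 'M[R]_(k + r)) (B : 'M[R]_(k + r, r + p))
    (C : 'M[R]_(r + p, k + r)) (D : 'M[R]_(r + p)) :
  D = - D^T ->
  \rank B = r ->
  forall NB NC : 'M[R]_(k + r, k),
  cols_span_ker NB B^T ->
  cols_span_ker NC C ->
  NB^T *m NC = 1%:M ->
  equiv_PH A B C D <->
  ( (* (1) *)
    [/\ (colker C^T == colker B)%MS, \rank (C *m B) = r & sym_psd (C *m B)]
  /\ (* (2) *)
    forall (V : 'M[R]_(r + p)) (B1 : 'M[R]_(k + r, r)) (C1 : 'M[R]_(r, k + r))
           (Y : 'M[R]_r),
      V^T *m V = 1%:M -> V *m V^T = 1%:M ->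
      B *m V = row_mx B1 0 ->
      C^T *m V = row_mx C1^T 0 ->
      \rank B1 = r -> \rank C1^T = r ->
      Y \in unitmx -> C1 *m B1 = Y *m Y^T ->
      let T0 : 'M[R]_(k + r) := col_mx NB^T (invmx Y *m C1) in
      let T0inv : 'M[R]_(k + r) := row_mx NC (B1 *m invmx Y^T) in
      exists Z : 'M[R]_k, Z \in unitmx /\
        let M := block_mx Z 0 0 1%:M *m (T0 *m A *m T0inv)
                   *m block_mx (invmx Z) 0 0 1%:M in
        nsd (M + M^T)).

Proof.
move=> hD hrB NB NC hNB hNC hNN.
have E := @equivX R _ _ A B C D hD.
have hNB0 : NB^T *m B = 0.
  move: hNB; rewrite /cols_span_ker /colker trmxK => /andP [h _].
  by move: h; rewrite sub_kermx => /eqP.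
have hCN0 : C *m NC = 0.
  move: hNC; rewrite /cols_span_ker /colker => /andP [h _].
  move: h; rewrite sub_kermx => /eqP h.
  by rewrite -[C]trmxK -[NC]trmxK -trmx_mul h trmx0.
split.
- move=> /E [X [hX [hC hq]]]; split.
  + split.
    * rewrite /colker trmxK; set K1 := kermx C; set K2 := kermx B^T.
      have hXu := pd_unit hX.
      apply/andP; split; rewrite sub_kermx; apply/eqP.
      - have h := mulmx_ker C; rewrite -/K1 hC mulmxA in h.
        by rewrite -[_ *m _]mulmx1 -(mulmxV hXu) mulmxA h mul0mx.
      - by rewrite hC mulmxA mulmx_ker mul0mx.
    * by rewrite hC rank_BXB.
    * rewrite hC; split; first by rewrite !trmx_mul trmxK hX.1 mulmxA.
      move=> x; have -> : (x^T *m (B^T *m X *m B) *m x) 0 0 = qf X (B *m x).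
        by rewrite /qf trmx_mul !mulmxA.
      have [->|nz] := eqVneq (B *m x) 0; first by rewrite qf0.
      exact: ltW (hX.2 _ nz).
  + move=> V B1 C1 Y hVV hVV' hBV hCV _ _ hY hYY.
    exact: (fwd2 hX hC hq hNB0 hCN0 hNN hBV hCV hY hYY).
- move=> [[hker hrCB hpsd] H2].
  apply/E.
  move: hker; rewrite /colker trmxK => hker.
  have hrC : \rank C = r by rewrite (rank_from_ker hker) mxrank_tr.
  have [Q [hQQ hQK]] : exists Q : 'M[R]_(p, r + p), Q *m Q^T = 1%:M /\ (Q <= kermx B^T)%MS.
    by apply: exists_orth; rewrite mxrank_ker mxrank_tr hrB addKn.
  have hrQ := orth_rank hQQ.
  have [P [hPP hPK]] : exists P : 'M[R]_(r, r + p), P *m P^T = 1%:M /\ (P <= kermx Q^T)%MS.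
    by apply: exists_orth; rewrite mxrank_ker mxrank_tr hrQ addnK.
  have hPQ : P *m Q^T = 0 by apply/eqP; rewrite -sub_kermx.
  have hQP : Q *m P^T = 0 by rewrite -[Q]trmxK -trmx_mul hPQ trmx0.
  have hQB : Q *m B^T = 0 by apply/eqP; rewrite -sub_kermx.
  have hQC : Q *m C = 0.
    apply/eqP; rewrite -sub_kermx; apply: submx_trans hQK _.
    by case/andP: hker.
  set V : 'M[R]_(r + p) := row_mx P^T Q^T.
  have hVtV : V^T *m V = 1%:M.
    rewrite /V tr_row_mx !trmxK mul_col_row hPP hQQ hPQ hQP.
    by rewrite -scalar_mx_block.
  have hVVt := mulmx1C hVtV.
  have hVu : V \in unitmx := (mulmx1_unit hVtV).2.
  have hVf : row_free V by rewrite row_free_unit.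
  have hBV : B *m V = row_mx (B *m P^T) 0.
    have e : B *m Q^T = 0 by rewrite -[B]trmxK -trmx_mul hQB trmx0.
    by rewrite /V mul_mx_row e.
  have hCV : C^T *m V = row_mx (P *m C)^T 0.
    have e : C^T *m Q^T = 0 by rewrite -trmx_mul hQC trmx0.
    by rewrite /V mul_mx_row e trmx_mul.
  have hrB1 : \rank (B *m P^T) = r.
    by rewrite -(rank_row_mx0 p) -hBV mxrankMfree.
  have hrC1 : \rank (P *m C)^T = r.
    by rewrite -(rank_row_mx0 p) -hCV mxrankMfree // mxrank_tr.
  set C1 := P *m C in hCV hrC1 *.
  set B1 := B *m P^T in hBV hrB1 *.
  have hpsd1 : sym_psd (C1 *m B1).
    split.
      have hs := hpsd.1; rewrite trmx_mul in hs.
      by rewrite /C1 /B1 !trmx_mul trmxK -!mulmxA (mulmxA B^T) hs !mulmxA.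
    move=> x.
    have -> : (x^T *m (C1 *m B1) *m x) 0 0 = qf (C *m B) (P^T *m x).
      by rewrite /qf /C1 /B1 trmx_mul trmxK !mulmxA.
    exact: hpsd.2.
  have hblk : V^T *m (C *m B) *m V = block_mx (C1 *m B1) 0 0 0.
    rewrite mulmxA -mulmxA -[V^T *m C]trmxK trmx_mul trmxK hCV hBV tr_row_mx trmxK.
    by rewrite trmx0 mul_col_row !mul0mx !mulmx0.
  have hu1 : C1 *m B1 \in unitmx.
    rewrite -row_free_unit /row_free.
    have : \rank (V^T *m (C *m B) *m V) = r.
      rewrite mxrankMfree // -mxrank_tr trmx_mul trmxK mxrankMfree //.
      by rewrite mxrank_tr.
    by rewrite hblk rank_diag_block_mx mxrank0 addn0 => ->.
  have [Y [hYu eY]] := chol (psd_unit_pd hpsd1 hu1).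
  have [Z [hZ hM]] := H2 V B1 C1 Y hVtV hVVt hBV hCV hrB1 hrC1 hYu eY.
  move: hM => /= /nsdE hM.
  set T0 : 'M[R]_(k + r) := col_mx NB^T (invmx Y *m C1) in hM.
  set T0inv : 'M[R]_(k + r) := row_mx NC (B1 *m invmx Y^T) in hM.
  have hT : T0 *m T0inv = 1%:M := T0_inv hNB0 hCN0 hNN hBV hCV hYu eY.
  set W' := block_mx Z 0 0 1%:M *m T0.
  set W := T0inv *m block_mx (invmx Z) 0 0 1%:M.
  have hW'W : W' *m W = 1%:M.
    by rewrite /W' /W -mulmxA (mulmxA T0) hT mul1mx diag_mul.
  have hWW' := mulmx1C hW'W.
  have hMW : forall y, qf (W' *m A *m W) y <= 0.
    move=> y; have := hM y.
    have -> : block_mx Z 0 0 1%:M *m (T0 *m A *m T0inv) *m block_mx (invmx Z) 0 0 1%:M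
              = W' *m A *m W by rewrite /W' /W !mulmxA; reflexivity.
    done.
  have hW'c : W' = col_mx (Z *m NB^T) (invmx Y *m C1).
    by rewrite /W' /T0 mul_block_col !mul0mx addr0 add0r mul1mx.
  clearbody W' W.
  exists (W'^T *m W'); split; last split.
  - split; first by rewrite trmx_mul trmxK.
    move=> x nz.
    have -> : (x^T *m (W'^T *m W') *m x) 0 0 = ((W' *m x)^T *m (W' *m x)) 0 0.
      by rewrite [(W' *m x)^T]trmx_mul !mulmxA.
    apply: sumsq_gt0; apply/eqP => h; move/eqP: nz; apply.
    by rewrite -[x]mul1mx -hWW' -mulmxA h mulmx0.
  - have hCdec : C = P^T *m C1.
      have h := hVVt; rewrite /V tr_row_mx !trmxK mul_row_col in h.
      by rewrite -{1}[C]mul1mx -h mulmxDl -!mulmxA hQC mulmx0 addr0.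
    have hs := hpsd.1; rewrite trmx_mul in hs.
    have e2 : B^T *m C1^T = P^T *m (Y *m Y^T).
      by rewrite /C1 trmx_mul mulmxA hs {1}hCdec -eY /B1 !mulmxA.
    have e1 : W' *m B = col_mx 0 (invmx Y *m C1 *m B).
      by rewrite hW'c mul_col_mx -mulmxA hNB0 mulmx0.
    rewrite mulmxA -trmx_mul e1 tr_col_mx trmx0 hW'c mul_row_col mul0mx add0r.
    have e2' : B^T *m C^T *m P^T = P^T *m (Y *m Y^T).
      by rewrite -e2 /C1 trmx_mul mulmxA.
    rewrite !trmx_mul !mulmxA e2' trmx_inv -!mulmxA.
    by rewrite mulKVmx ?unitmx_tr // mulKVmx //.
  - move=> x.
    have e3 : W'^T *m W' *m A = W'^T *m (W' *m A *m W) *m W'.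
      by rewrite -!mulmxA hWW' mulmx1.
    by rewrite e3 qfM.
Qed.
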